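(* For every $r\in[0,1]$, the density of $1$'s in $b(r)$ exists and equals $r$, i.e. $\lim_{n\to\infty}|\{m<n:b(r)(m)=1\}|/n=r$.
   Context: For $X,Y\in2^\omega$, $(X\oplus Y)(2n)=X(n)$, $(X\oplus Y)(2n+1)=Y(n)$. The map $b:[0,1]\to2^\omega$ is defined recursively by $b(0)=0^\omega$, $b(1)=1^\omega$, $b(r)=0^\omega\oplus b(2r)$ for $0<r\le1/2$, and $b(r)=b(2r-1)\oplus1^\omega$ for $1/2\le r<1$. *)

(* Defs.v *)
From Stdlib Require Import Reals Lra Lia Arith List ClassicalDescription.
From Coquelicot Require Import Coquelicot.
Open Scope R_scope.

(* Cantor space 2^omega as nat -> bool.
   X (+) Y : (X (+) Y)(2n) = X n, (X (+) Y)(2n+1) = Y n. *)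
Definition join (X Y : nat -> bool) : nat -> bool :=
  fun k => if Nat.even k then X (Nat.div2 k) else Y (Nat.div2 k).

(* Fuel-bounded unfolding of the recursive definition of b:
     b(0) = 0^omega, b(1) = 1^omega,
     b(r) = 0^omega (+) b(2r)        for 0 < r <= 1/2,
     b(r) = b(2r-1) (+) 1^omega      for 1/2 <= r < 1
   (the two clauses agree at r = 1/2).  [b_fuel k r n] returns
   [Some (b(r)(n))] if the value is reached within k unfolding steps. *)
Fixpoint b_fuel (k : nat) (r : R) (n : nat) : option bool :=
  match k with
  | O => None
  | S k' =>
    if Req_EM_T r 0 then Some false
    else if Req_EM_T r 1 then Some true
    else if Rle_dec r (1/2) then
      (if Nat.even n then Some false else b_fuel k' (2 * r) (Nat.div2 n))
    else
      (if Nat.even n then b_fuel k' (2 * r - 1) (Nat.div2 n) else Some true)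
  end.

Definition b (r : R) (n : nat) : bool :=
  if excluded_middle_informative (exists k, b_fuel k r n = Some true)
  then true else false.

Definition ones_below (X : nat -> bool) (n : nat) : nat :=
  length (filter X (seq 0 n)).

(* Main.v *)
Require Import Defs.
From Stdlib Require Import Reals List.
From Coquelicot Require Import Coquelicot.
From Stdlib Require Import Lra Lia Arith Psatz Bool ClassicalDescription ZArith.
Open Scope R_scope.

Lemma bE r n : b r n = true <-> exists k, b_fuel k r n = Some true.
Proof.
  unfold b; destruct excluded_middle_informative as [H|H]; split; intros; auto; try discriminate.
Qed.

Lemma b_0 n : b 0 n = false.
Proof.
  destruct (b 0 n) eqn:E; auto. apply bE in E. destruct E as [k Hk].
  destruct k; simpl in Hk; try discriminate.
  destruct Req_EM_T; [discriminate|lra].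
Qed.

Lemma b_1 n : b 1 n = true.
Proof.
  apply bE. exists 1%nat. simpl. destruct Req_EM_T; [lra|]. destruct Req_EM_T; [auto|lra].
Qed.

Lemma b_lo r n : r <> 0 -> r <> 1 -> r <= 1/2 ->
  b r n = if Nat.even n then false else b (2*r) (Nat.div2 n).
Proof.
  intros H0 H1 H2. apply eq_iff_eq_true. rewrite bE.
  destruct (Nat.even n) eqn:En.
  - split; [|discriminate]. intros [k Hk]. destruct k; simpl in Hk; [discriminate|].
    destruct Req_EM_T; [lra|]. destruct Req_EM_T; [lra|].
    destruct Rle_dec; [|lra]. rewrite En in Hk. discriminate.
  - rewrite bE. split.
    + intros [k Hk]. destruct k; simpl in Hk; [discriminate|].
      destruct Req_EM_T; [lra|]. destruct Req_EM_T; [lra|].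
      destruct Rle_dec; [|lra]. rewrite En in Hk. eauto.
    + intros [k Hk]. exists (S k). simpl.
      destruct Req_EM_T; [lra|]. destruct Req_EM_T; [lra|].
      destruct Rle_dec; [|lra]. rewrite En. auto.
Qed.

Lemma b_hi r n : r <> 0 -> r <> 1 -> ~ r <= 1/2 ->
  b r n = if Nat.even n then b (2*r-1) (Nat.div2 n) else true.
Proof.
  intros H0 H1 H2. apply eq_iff_eq_true. rewrite bE.
  destruct (Nat.even n) eqn:En.
  - rewrite bE. split.
    + intros [k Hk]. destruct k; simpl in Hk; [discriminate|].
      destruct Req_EM_T; [lra|]. destruct Req_EM_T; [lra|].
      destruct Rle_dec; [lra|]. rewrite En in Hk. eauto.
    + intros [k Hk]. exists (S k). simpl.
      destruct Req_EM_T; [lra|]. destruct Req_EM_T; [lra|].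
      destruct Rle_dec; [lra|]. rewrite En. auto.
  - split; auto. intros _. exists 1%nat. simpl.
    destruct Req_EM_T; [lra|]. destruct Req_EM_T; [lra|].
    destruct Rle_dec; [lra|]. rewrite En. auto.
Qed.

Lemma ones_S X n : ones_below X (S n) = (ones_below X n + (if X n then 1 else 0))%nat.
Proof.
  unfold ones_below. rewrite seq_S, filter_app, length_app. simpl.
  destruct (X n); simpl; lia.
Qed.

Lemma ones_0 X : ones_below X 0 = 0%nat.
Proof. reflexivity. Qed.

Lemma div2_2k k : Nat.div2 (2*k) = k.
Proof. induction k; auto. replace (2 * S k)%nat with (S (S (2*k))) by lia. simpl. auto. Qed.
Lemma div2_2k1 k : Nat.div2 (2*k+1) = k.
Proof. induction k; auto. replace (2 * S k + 1)%nat with (S (S (2*k+1))) by lia. simpl. auto. Qed.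

Lemma ones_lo X Y : (forall m, X m = if Nat.even m then false else Y (Nat.div2 m)) ->
  forall k, ones_below X (2*k) = ones_below Y k /\ ones_below X (2*k+1) = ones_below Y k.
Proof.
  intros HX k. induction k as [|k [IH1 IH2]].
  - simpl. rewrite ones_S, ones_0, HX. simpl. auto.
  - replace (2 * S k)%nat with (S (2*k+1)) by lia.
    replace (S (2*k+1) + 1)%nat with (S (S (2*k+1))) by lia.
    rewrite !ones_S, IH2, (HX (2*k+1)%nat), (HX (S (2*k+1))), Nat.even_odd, div2_2k1.
    replace (S (2*k+1)) with (2 * S k)%nat by lia. rewrite Nat.even_even.
    split; lia.
Qed.

Lemma ones_hi X Y : (forall m, X m = if Nat.even m then Y (Nat.div2 m) else true) ->
  forall k, ones_below X (2*k) = (ones_below Y k + k)%nat /\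
            ones_below X (2*k+1) = (ones_below Y (S k) + k)%nat.
Proof.
  intros HX k. induction k as [|k [IH1 IH2]].
  - simpl. rewrite ones_S, ones_0, HX. simpl. split; auto. unfold ones_below; simpl. destruct (Y 0%nat); auto.
  - replace (2 * S k)%nat with (S (2*k+1)) by lia.
    replace (S (2*k+1) + 1)%nat with (S (S (2*k+1))) by lia.
    rewrite !ones_S, IH2, (HX (2*k+1)%nat), (HX (S (2*k+1))), Nat.even_odd.
    replace (S (2*k+1)) with (2 * S k)%nat by lia. rewrite Nat.even_even, div2_2k.
    rewrite (ones_S Y k). split; lia.
Qed.

Lemma ones_const_false X n : (forall m, X m = false) -> ones_below X n = 0%nat.
Proof. intros H; induction n; auto. rewrite ones_S, H, IHn. auto. Qed.
Lemma ones_const_true X n : (forall m, X m = true) -> ones_below X n = n.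
Proof. intros H; induction n; auto. rewrite ones_S, H, IHn. lia. Qed.
Lemma ones_le X n : (ones_below X n <= n)%nat.
Proof. induction n; auto. rewrite ones_S. destruct (X n); lia. Qed.

Lemma sqrt_step (e d : R) (m n : nat) :
  Rabs e <= 4 * sqrt (INR m) -> Rabs d <= 1/2 -> (2*m <= n+1)%nat -> (2 <= n)%nat ->
  Rabs (e + d) <= 4 * sqrt (INR n).
Proof.
  intros He Hd Hmn Hn.
  assert (Hm' : 2 * INR m <= INR n + 1).
  { replace 2 with (INR 2) by (simpl; lra). rewrite <- mult_INR, <- S_INR. apply le_INR. lia. }
  assert (Hn' : 2 <= INR n) by (replace 2 with (INR 2) by (simpl; lra); apply le_INR; lia).
  pose proof (sqrt_pos (INR m)). pose proof (sqrt_pos (INR n)).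
  pose proof (sqrt_sqrt (INR m) (pos_INR m)). pose proof (sqrt_sqrt (INR n) (pos_INR n)).
  set (t := sqrt (INR m)) in *. set (s := sqrt (INR n)) in *.
  assert (s >= 1) by nra.
  assert (4*t + 1/2 <= 4*s) by nra.
  pose proof (Rabs_triang e d). lra.
Qed.

Definition err r n := INR (ones_below (b r) n) - r * INR n.

Lemma err_bound : forall n r, 0 <= r <= 1 -> Rabs (err r n) <= 4 * sqrt (INR n).
Proof.
  intro n. induction n as [n IH] using (well_founded_induction lt_wf).
  intros r Hr. unfold err.
  destruct (Nat.lt_ge_cases n 2) as [Hn|Hn].
  - destruct n as [|[|n]]; [| |lia].
    + simpl. rewrite Rmult_0_r, Rminus_0_r, Rabs_R0. pose proof (sqrt_pos 0). lra.
    + simpl INR; rewrite sqrt_1. pose proof (ones_le (b r) 1). 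
      assert (0 <= INR (ones_below (b r) 1) <= 1) by (split; [apply pos_INR| replace 1 with (INR 1) by auto; apply le_INR; auto]).
      simpl INR. apply Rabs_le. lra.
  - destruct (Req_EM_T r 0) as [E0|E0].
    { subst. rewrite ones_const_false by apply b_0. simpl. rewrite Rmult_0_l, Rminus_0_r, Rabs_R0.
      pose proof (sqrt_pos (INR n)). lra. }
    destruct (Req_EM_T r 1) as [E1|E1].
    { subst. rewrite ones_const_true by apply b_1. rewrite Rmult_1_l, Rminus_diag, Rabs_R0.
      pose proof (sqrt_pos (INR n)). lra. }
    destruct (Rle_dec r (1/2)) as [Hl|Hl].
    + pose proof (ones_lo (b r) (b (2*r)) (fun m => b_lo r m E0 E1 Hl)) as HL.
      assert (Hr2 : 0 <= 2*r <= 1) by lra.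
      destruct (Nat.Even_or_Odd n) as [[k Hk]|[k Hk]]; subst n.
      * destruct (HL k) as [H _]. rewrite H.
        pose proof (IH k ltac:(lia) _ Hr2) as IHk. unfold err in IHk.
        replace (INR (ones_below (b (2 * r)) k) - r * INR (2 * k))
          with ((INR (ones_below (b (2 * r)) k) - 2 * r * INR k) + 0) by (rewrite mult_INR; simpl; lra).
        apply (sqrt_step _ _ k); auto; try lia. rewrite Rabs_R0; lra.
      * destruct (HL k) as [_ H]. rewrite H.
        pose proof (IH k ltac:(lia) _ Hr2) as IHk. unfold err in IHk.
        replace (INR (ones_below (b (2 * r)) k) - r * INR (2 * k + 1))
          with ((INR (ones_below (b (2 * r)) k) - 2 * r * INR k) + (- r))
          by (rewrite ?plus_INR, ?mult_INR; simpl; lra).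
        apply (sqrt_step _ _ k); auto; try lia. apply Rabs_le; lra.
    + pose proof (ones_hi (b r) (b (2*r-1)) (fun m => b_hi r m E0 E1 Hl)) as HL.
      assert (Hr2 : 0 <= 2*r-1 <= 1) by lra.
      destruct (Nat.Even_or_Odd n) as [[k Hk]|[k Hk]]; subst n.
      * destruct (HL k) as [H _]. rewrite H.
        pose proof (IH k ltac:(lia) _ Hr2) as IHk. unfold err in IHk.
        replace (INR (ones_below (b (2 * r - 1)) k + k) - r * INR (2 * k))
          with ((INR (ones_below (b (2 * r - 1)) k) - (2 * r - 1) * INR k) + 0)
          by (rewrite ?plus_INR, ?mult_INR; simpl; lra).
        apply (sqrt_step _ _ k); auto; try lia. rewrite Rabs_R0; lra.
      * destruct (HL k) as [_ H]. rewrite H.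
        pose proof (IH (S k) ltac:(lia) _ Hr2) as IHk. unfold err in IHk.
        replace (INR (ones_below (b (2 * r - 1)) (S k) + k) - r * INR (2 * k + 1))
          with ((INR (ones_below (b (2 * r - 1)) (S k)) - (2 * r - 1) * INR (S k)) + (r - 1))
          by (rewrite ?plus_INR, ?mult_INR, ?S_INR; simpl; lra).
        apply (sqrt_step _ _ (S k)); auto; try lia. apply Rabs_le; lra.
Qed.

Theorem lemma2p6 : forall r : R, 0 <= r <= 1 ->
  is_lim_seq (fun n : nat => INR (ones_below (b r) n) / INR n) r.
Proof.
  intros r Hr. apply is_lim_seq_spec. intros eps.
  pose proof (cond_pos eps) as Heps.
  destruct (archimed ((4/eps)^2)) as [Harch _].
  set (N := Z.to_nat (up ((4/eps)^2))).
  assert (HN : (4/eps)^2 < INR N).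
  { unfold N. rewrite INR_IZR_INZ, Z2Nat.id; auto.
    apply le_IZR. pose proof (pow2_ge_0 (4/eps)). lra. }
  exists (S N). intros n Hn.
  assert (Hn' : INR N < INR n) by (apply lt_INR; lia).
  pose proof (err_bound n r Hr) as He. unfold err in He.
  assert (Hpos : 0 < INR n) by (pose proof (pow2_ge_0 (4/eps)); lra).
  replace (INR (ones_below (b r) n) / INR n - r)
    with ((INR (ones_below (b r) n) - r * INR n) / INR n) by (field; lra).
  unfold Rdiv. rewrite Rabs_mult, Rabs_inv, (Rabs_right (INR n)) by lra.
  apply (Rmult_lt_reg_r (INR n)); auto.
  rewrite Rmult_assoc, Rinv_l by lra.
  pose proof (sqrt_pos (INR n)). pose proof (sqrt_sqrt (INR n) (pos_INR n)).
  set (s := sqrt (INR n)) in *.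
  assert (H4 : 4 / eps < s).
  { assert (0 < 4/eps) by (apply Rdiv_lt_0_compat; lra).
    simpl in HN. nra. }
  assert (4 < eps * s).
  { apply (Rmult_lt_compat_l eps) in H4; auto. field_simplify in H4; lra. }
  nra.
Qed.
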